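(* There exist an argumentation semantics $\sigma$ whose extensions are maximal conflict-free sets (w.r.t. set inclusion) and argumentation frameworks $AF=(AR,Attacks)$, $AF'=(AR',Attacks')$ with $AF\preceq_N AF'$ such that the following statement does NOT hold: if for all $E\in\sigma(AF)$ and all $E'\in\sigma(AF')$ we have $E'\not\subseteq AR$ or $E'=E$, then for every $E\in\sigma(AF)$, $$\{(a,b)\in Attacks': a\in AR'\setminus AR,\ b\in E\}=\emptyset\ \Longrightarrow\ \forall E'\in\sigma(AF'),\ E\subseteq E'.$$
   Context: An argumentation framework is a pair $(AR,Attacks)$ with $AR$ a finite set and $Attacks\subseteq AR\times AR$; $a$ attacks $b$ iff $(a,b)\in Attacks$. A set $S$ is conflict-free iff no element of $S$ attacks an element of $S$. An argumentation semantics $\sigma$ assigns to each argumentation framework a set $\sigma(AF)$ of subsets of $AR$; ''$\sigma$'s extensions are maximal conflict-free sets'' means that for every $AF$, every $E\in\sigma(AF)$ is a $\subseteq$-maximal conflict-free subset of the argument set of $AF$. $AF\preceq_N AF'$ (normal expansion) iff $AR\subseteq AR'$, $Attacks\subseteq Attacks'$ and no $(a,b)\in Attacks'\setminus Attacks$ has both $a,b\in AR$. *)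

(* Defs.v *)
From HB Require Import structures.
From mathcomp Require Import all_boot.
From mathcomp Require Import finmap.
Set Implicit Arguments. Unset Strict Implicit. Unset Printing Implicit Defensive.
Local Open Scope fset_scope.

Record AF := mkAF { AR : {fset nat}; Attacks : {fset (nat * nat)} }.

Definition wf_AF (F : AF) : Prop :=
  forall a b, (a, b) \in Attacks F -> a \in AR F /\ b \in AR F.

Definition conflict_free (F : AF) (S : {fset nat}) : Prop :=
  forall a b, a \in S -> b \in S -> (a, b) \notin Attacks F.

Definition maximal_cf (F : AF) (S : {fset nat}) : Prop :=
  [/\ S `<=` AR F, conflict_free F S &
      forall T : {fset nat}, S `<=` T -> T `<=` AR F -> conflict_free F T -> T = S].

Definition semantics := AF -> {fset nat} -> Prop.

Definition maxcf_semantics (sigma : semantics) : Prop :=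
  forall F, wf_AF F -> forall E, sigma F E -> maximal_cf F E.

Definition normal_expansion (F F' : AF) : Prop :=
  [/\ AR F `<=` AR F', Attacks F `<=` Attacks F' &
      forall a b, (a, b) \in Attacks F' -> (a, b) \notin Attacks F ->
        ~ (a \in AR F /\ b \in AR F)].

(* Main.v *)
Require Import Defs.
From mathcomp Require Import all_boot.
From mathcomp Require Import finmap.
Local Open Scope fset_scope.

Definition F0 := mkAF [fset 1%N] fset0.
Definition F1 := mkAF [fset 1%N; 2%N] [fset (1%N, 2%N)].

Lemma mcf0 : maximal_cf F0 [fset 1%N].
Proof.
split => //= T h1 h2 _.
by apply/eqP; rewrite eqEfsubset h2 h1.
Qed.

Lemma mcf1 : maximal_cf F1 [fset 2%N].
Proof.
split => //=.
- by apply/fsubsetP => x; rewrite !inE => /eqP ->; rewrite eqxx orbT.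
- by move=> a b; rewrite !inE => /eqP -> /eqP ->.
- move=> T h1 h2 hc; apply/eqP; rewrite eqEfsubset h1 andbT.
  apply/fsubsetP => x xT.
  have := fsubsetP h2 x xT; rewrite !inE => /orP [/eqP ex|//].
  subst x.
  have h2T : 2%N \in T by apply: (fsubsetP h1); rewrite inE.
  by have := hc _ _ xT h2T; rewrite inE eqxx.
Qed.

Definition sig0 : semantics := fun G E =>
  (G = F0 /\ E = [fset 1%N]) \/ (G = F1 /\ E = [fset 2%N]).

Theorem proposition54 :
  exists sigma : semantics, maxcf_semantics sigma /\
  exists F F' : AF, [/\ wf_AF F, wf_AF F', normal_expansion F F' &
    ~ ((forall E E', sigma F E -> sigma F' E' -> ~ (E' `<=` AR F) \/ E' = E) ->
       forall E, sigma F E ->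
         (forall a b, (a, b) \in Attacks F' -> a \in AR F' -> a \notin AR F ->
            b \notin E) ->
         forall E', sigma F' E' -> E `<=` E')].
Proof.
exists sig0; split.
  by move=> G _ E [[-> ->]|[-> ->]]; [exact: mcf0|exact: mcf1].
have F01 : F0 <> F1.
  move=> e; have : 2%N \in AR F1 by rewrite !inE eqxx orbT.
  by rewrite -e /= inE.
exists F0, F1; split.
- by move=> a b /=; rewrite in_fset0.
- move=> a b /= /fset1P [-> ->]; split; by rewrite !inE.
- split => //=.
  + apply/fsubsetP => x; rewrite !inE => -> //.
  + move=> a b /fset1P [-> ->] _ [_]; by rewrite !inE.
- move=> H.
  have hyp : forall E E', sig0 F0 E -> sig0 F1 E' -> ~ E' `<=` AR F0 \/ E' = E.
    move=> E E' [[_ ->]|[e _]] [[e2 _]|[_ ->]]; try by [exfalso; apply: F01].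
    left => /fsubsetP /(_ 2%N); rewrite !inE eqxx => /(_ isT).
    done.
  have hatt : forall a b, (a, b) \in Attacks F1 -> a \in AR F1 -> a \notin AR F0 ->
     b \notin [fset 1%N].
    move=> a b /fset1P [-> ->] _; by rewrite !inE.
  have := H hyp [fset 1%N] (or_introl (conj erefl erefl)) hatt [fset 2%N]
    (or_intror (conj erefl erefl)).
  by move=> /fsubsetP /(_ 1%N); rewrite !inE eqxx => /(_ isT).
Qed.
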